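(* Let $\mathcal{P}$ be a pointsymmetric convex polyhedron with radius $1$ and $\widetilde{\mathcal{P}}$ a $\kappa$-rational approximation of it; let $\widetilde S\in\widetilde{\mathcal{P}}$. Let $\varepsilon>0$, $\bar\theta_1,\bar\varphi_1,\bar\theta_2,\bar\varphi_2,\bar\alpha\in\mathbb{Q}\cap[-4,4]$, and $w\in\mathbb{Q}^2$ a unit vector. Write $\overline{M_k}=M_{\mathbb{Q}}(\bar\theta_k,\bar\varphi_k)$, $\overline{M_k}^\theta=M^\theta_{\mathbb{Q}}(\bar\theta_k,\bar\varphi_k)$, $\overline{M_k}^\varphi=M^\varphi_{\mathbb{Q}}(\bar\theta_k,\bar\varphi_k)$ for $k=1,2$ and set \[ G^{\mathbb{Q}}=\langle R_{\mathbb{Q}}(\bar\alpha)\overline{M_1}\widetilde S,w\rangle-\varepsilon\big(|\langle R'_{\mathbb{Q}}(\bar\alpha)\overline{M_1}\widetilde S,w\rangle|+|\langle R_{\mathbb{Q}}(\bar\alpha)\overline{M_1}^\theta\widetilde S,w\rangle|+|\langle R_{\mathbb{Q}}(\bar\alpha)\overline{M_1}^\varphi\widetilde S,w\rangle|\big)-\tfrac92\varepsilon^2-4\kappa(1+3\varepsilon), \] \[ H^{\mathbb{Q}}_P=\langle\overline{M_2}P,w\rangle+\varepsilon\big(|\langle\overline{M_2}^\theta P,w\rangle|+|\langle\overline{M_2}^\varphi P,w\rangle|\big)+2\varepsilon^2+3\kappa(1+2\varepsilon). \] If $G^{\mathbb{Q}}>\max_{P\in\widetilde{\mathcal{P}}}H^{\mathbb{Q}}_P$,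 then there is no $(\theta_1,\varphi_1,\theta_2,\varphi_2,\alpha)$ with $|\theta_k-\bar\theta_k|,|\varphi_k-\bar\varphi_k|,|\alpha-\bar\alpha|\le\varepsilon$ such that $R(\alpha)M(\theta_1,\varphi_1)\mathcal{P}\subset\operatorname{int}\operatorname{conv}(M(\theta_2,\varphi_2)\mathcal{P})$.
   Context: $\kappa=10^{-10}$. $R(\alpha)=\begin{pmatrix}\cos\alpha&-\sin\alpha\\ \sin\alpha&\cos\alpha\end{pmatrix}$, $R'=\frac{d}{d\alpha}R$; $M(\theta,\varphi)=\begin{pmatrix}-\sin\theta&\cos\theta&0\\ -\cos\theta\cos\varphi&-\sin\theta\cos\varphi&\sin\varphi\end{pmatrix}$, $M^\theta=\partial_\theta M$, $M^\varphi=\partial_\varphi M$. Define $\sin_{\mathbb{Q}}(x)=\sum_{k=0}^{12}(-1)^k\frac{x^{2k+1}}{(2k+1)!}$ and $\cos_{\mathbb{Q}}(x)=\sum_{k=0}^{12}(-1)^k\frac{x^{2k}}{(2k)!}$; $R_{\mathbb{Q}},R'_{\mathbb{Q}},M_{\mathbb{Q}},M^\theta_{\mathbb{Q}},M^\varphi_{\mathbb{Q}}$ are obtained from $R,R',M,M^\theta,M^\varphi$ by replacing $\sin,\cos$ by $\sin_{\mathbb{Q}},\cos_{\mathbb{Q}}$. A polyhedron is a finite non-degenerate set of points of $\mathbb{R}^3$ in convex position; pointsymmetric means $\mathcal{P}=-\mathcal{P}$; radius $1$ means all points have norm $\le1$ with equality for some. A $\kappa$-rational approximation of $\mathcal{P}=\{P_i\}$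 is a set $\widetilde{\mathcal{P}}=\{\widetilde P_i\}\subset\mathbb{Q}^3$ with $\|P_i-\widetilde P_i\|\le\kappa$ for each $i$. *)

(* Defs.v *)
From Stdlib Require Import Reals QArith Qreals.
Open Scope R_scope.

Definition vec3 : Type := (R * R * R)%type.
Definition vec2 : Type := (R * R)%type.

Definition v3x (v : vec3) : R := fst (fst v).
Definition v3y (v : vec3) : R := snd (fst v).
Definition v3z (v : vec3) : R := snd v.

Definition kappa : R := / (10 ^ 10).

Definition is_rat (x : R) : Prop := exists q : Q, x = Q2R q.
Definition is_rat3 (v : vec3) : Prop := is_rat (v3x v) /\ is_rat (v3y v) /\ is_rat (v3z v).
Definition is_rat2 (v : vec2) : Prop := is_rat (fst v) /\ is_rat (snd v).

Definition norm3 (v : vec3) : R := sqrt (v3x v ^ 2 + v3y v ^ 2 + v3z v ^ 2).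
Definition sub3 (u v : vec3) : vec3 := (v3x u - v3x v, v3y u - v3y v, v3z u - v3z v).
Definition opp3 (u : vec3) : vec3 := (- v3x u, - v3y u, - v3z u).
Definition dot2 (u v : vec2) : R := fst u * fst v + snd u * snd v.
Definition dist2 (u v : vec2) : R := sqrt ((fst u - fst v) ^ 2 + (snd u - snd v) ^ 2).

Fixpoint rsum (n : nat) (g : nat -> R) : R :=
  match n with O => 0 | S m => rsum m g + g m end.

Definition sinQ (x : R) : R :=
  sum_f_R0 (fun k => (-1) ^ k * x ^ (2 * k + 1) / INR (Factorial.fact (2 * k + 1))) 12.
Definition cosQ (x : R) : R :=
  sum_f_R0 (fun k => (-1) ^ k * x ^ (2 * k) / INR (Factorial.fact (2 * k))) 12.

Definition Rot_gen (sn cs : R -> R) (a : R) (v : vec2) : vec2 :=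
  (cs a * fst v - sn a * snd v, sn a * fst v + cs a * snd v).
Definition dRot_gen (sn cs : R -> R) (a : R) (v : vec2) : vec2 :=
  (- sn a * fst v - cs a * snd v, cs a * fst v - sn a * snd v).
Definition M_gen (sn cs : R -> R) (t p : R) (v : vec3) : vec2 :=
  (- sn t * v3x v + cs t * v3y v,
   - cs t * cs p * v3x v - sn t * cs p * v3y v + sn p * v3z v).
(* M^theta = d/dt M = [[-cos t, -sin t, 0], [sin t cos p, -cos t cos p, 0]] *)
Definition Mt_gen (sn cs : R -> R) (t p : R) (v : vec3) : vec2 :=
  (- cs t * v3x v - sn t * v3y v,
   sn t * cs p * v3x v - cs t * cs p * v3y v).
(* M^phi = d/dp M = [[0,0,0], [cos t sin p, sin t sin p, cos p]] *)
Definition Mp_gen (sn cs : R -> R) (t p : R) (v : vec3) : vec2 :=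
  (0, cs t * sn p * v3x v + sn t * sn p * v3y v + cs p * v3z v).

Definition Rot := Rot_gen sin cos.
Definition Mmat := M_gen sin cos.
Definition RotQ := Rot_gen sinQ cosQ.
Definition dRotQ := dRot_gen sinQ cosQ.
Definition MQ := M_gen sinQ cosQ.
Definition MtQ := Mt_gen sinQ cosQ.
Definition MpQ := Mp_gen sinQ cosQ.

(* A finite point set is given as an indexed family P 0, ..., P (n-1). *)
Definition in_conv3_except (n : nat) (P : nat -> vec3) (i : nat) (x : vec3) : Prop :=
  exists l : nat -> R,
    (forall j, (j < n)%nat -> 0 <= l j) /\ l i = 0 /\ rsum n l = 1 /\
    v3x x = rsum n (fun j => l j * v3x (P j)) /\
    v3y x = rsum n (fun j => l j * v3y (P j)) /\
    v3z x = rsum n (fun j => l j * v3z (P j)).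

Definition in_conv2 (n : nat) (Q : nat -> vec2) (x : vec2) : Prop :=
  exists l : nat -> R,
    (forall j, (j < n)%nat -> 0 <= l j) /\ rsum n l = 1 /\
    fst x = rsum n (fun j => l j * fst (Q j)) /\
    snd x = rsum n (fun j => l j * snd (Q j)).

Definition in_int_conv2 (n : nat) (Q : nat -> vec2) (x : vec2) : Prop :=
  exists r, 0 < r /\ forall y, dist2 x y < r -> in_conv2 n Q y.

Definition polyhedron (n : nat) (P : nat -> vec3) : Prop :=
  (forall i j, (i < n)%nat -> (j < n)%nat -> P i = P j -> i = j) /\
  (~ exists a b c d : R, (a <> 0 \/ b <> 0 \/ c <> 0) /\
       forall i, (i < n)%nat -> a * v3x (P i) + b * v3y (P i) + c * v3z (P i) = d) /\
  (forall i, (i < n)%nat -> ~ in_conv3_except n P i (P i)).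

Definition pointsymmetric (n : nat) (P : nat -> vec3) : Prop :=
  forall i, (i < n)%nat -> exists j, (j < n)%nat /\ P j = opp3 (P i).

Definition radius_one (n : nat) (P : nat -> vec3) : Prop :=
  (forall i, (i < n)%nat -> norm3 (P i) <= 1) /\
  (exists i, (i < n)%nat /\ norm3 (P i) = 1).

Definition kappa_rat_approx (n : nat) (P Pt : nat -> vec3) : Prop :=
  forall i, (i < n)%nat -> is_rat3 (Pt i) /\ norm3 (sub3 (P i) (Pt i)) <= kappa.

Definition GQ (eps t1 p1 a : R) (S : vec3) (w : vec2) : R :=
  dot2 (RotQ a (MQ t1 p1 S)) w
  - eps * (Rabs (dot2 (dRotQ a (MQ t1 p1 S)) w)
           + Rabs (dot2 (RotQ a (MtQ t1 p1 S)) w)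
           + Rabs (dot2 (RotQ a (MpQ t1 p1 S)) w))
  - 9 / 2 * eps ^ 2 - 4 * kappa * (1 + 3 * eps).

Definition HQ (eps t2 p2 : R) (w : vec2) (P : vec3) : R :=
  dot2 (MQ t2 p2 P) w
  + eps * (Rabs (dot2 (MtQ t2 p2 P) w) + Rabs (dot2 (MpQ t2 p2 P) w))
  + 2 * eps ^ 2 + 3 * kappa * (1 + 2 * eps).

(* Main.v *)
Require Import Defs.
From Stdlib Require Import Reals QArith Qreals Lra Lia ZArith.
From Coquelicot Require Import Coquelicot.
Open Scope R_scope.



Lemma mvt01 (f df : R -> R) (a b : R) : a <= b ->
  (forall t, is_derive f t (df t)) ->
  exists c, a <= c <= b /\ f b - f a = df c * (b - a).
Proof.
  intros Hab Hd.
  destruct (MVT_gen f a b df) as [c [Hc He]].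
  - intros; apply Hd.
  - intros x _. apply derivable_continuous_pt.
    exists (df x). apply is_derive_Reals, Hd.
  - exists c; split; [|exact He].
    rewrite Rmin_left in Hc by lra; rewrite Rmax_right in Hc by lra; exact Hc.
Qed.

Lemma taylor1 (g g1 g2 : R -> R) (K : R) :
  (forall t, is_derive g t (g1 t)) -> (forall t, is_derive g1 t (g2 t)) ->
  (forall t, 0 <= t <= 1 -> Rabs (g2 t) <= K) ->
  Rabs (g 1 - g 0 - g1 0) <= K / 2.
Proof.
  intros H1 H2 HK.
  assert (Hg1 : forall c, 0 <= c <= 1 -> Rabs (g1 c - g1 0) <= K * c).
  { intros c Hc. destruct (mvt01 g1 g2 0 c) as [c' [Hc' E]]; try lra; auto.
    rewrite E, Rabs_mult, Rminus_0_r, (Rabs_right c) by lra.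
    apply Rmult_le_compat_r; [lra|]. apply HK; lra. }
  assert (Dm : forall s, forall t, is_derive (fun t => g t - t * g1 0 + s * K * t ^ 2 / 2) t (g1 t - g1 0 + s * K * t)).
  { intros s t. auto_derive. eexists; apply H1.
    replace (Derive (fun x => g x) t) with (g1 t) by (symmetry; apply is_derive_unique; apply H1).
    field. }
  destruct (mvt01 _ _ 0 1 Rle_0_1 (Dm 1)) as [c [Hc E1]].
  destruct (mvt01 _ _ 0 1 Rle_0_1 (Dm (-1))) as [d [Hd E2]].
  specialize (Hg1 c Hc) as Hc1. specialize (Hg1 d Hd) as Hd1.
  apply Rabs_le_between in Hc1. apply Rabs_le_between in Hd1.
  apply Rabs_le_between. simpl in E1, E2. split; nra.
Qed.
Definition Mtt_gen (sn cs : R -> R) (t p : R) (v : vec3) : vec2 :=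
  (sn t * v3x v - cs t * v3y v, cs t * cs p * v3x v + sn t * cs p * v3y v).
Definition Mtp_gen (sn cs : R -> R) (t p : R) (v : vec3) : vec2 :=
  (0, - sn t * sn p * v3x v + cs t * sn p * v3y v).
Definition Mpp_gen (sn cs : R -> R) (t p : R) (v : vec3) : vec2 :=
  (0, cs t * cs p * v3x v + sn t * cs p * v3y v - sn p * v3z v).

Definition FV a t p S w := dot2 (Rot_gen sin cos a (M_gen sin cos t p S)) w.
Definition FA a t p S w := dot2 (dRot_gen sin cos a (M_gen sin cos t p S)) w.
Definition FT a t p S w := dot2 (Rot_gen sin cos a (Mt_gen sin cos t p S)) w.
Definition FP a t p S w := dot2 (Rot_gen sin cos a (Mp_gen sin cos t p S)) w.
Definition FAT a t p S w := dot2 (dRot_gen sin cos a (Mt_gen sin cos t p S)) w.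
Definition FAP a t p S w := dot2 (dRot_gen sin cos a (Mp_gen sin cos t p S)) w.
Definition FTT a t p S w := dot2 (Rot_gen sin cos a (Mtt_gen sin cos t p S)) w.
Definition FTP a t p S w := dot2 (Rot_gen sin cos a (Mtp_gen sin cos t p S)) w.
Definition FPP a t p S w := dot2 (Rot_gen sin cos a (Mpp_gen sin cos t p S)) w.

Section D.
Variables (a th ph da dt dp : R) (S : vec3) (w : vec2).
Definition gg t := FV (a + t*da) (th + t*dt) (ph + t*dp) S w.
Definition gg1 t := let A := a + t*da in let T := th + t*dt in let P := ph + t*dp in
  da * FA A T P S w + dt * FT A T P S w + dp * FP A T P S w.
Definition gg2 t := let A := a + t*da in let T := th + t*dt in let P := ph + t*dp in
  da*da*(- FV A T P S w) + dt*dt*FTT A T P S w + dp*dp*FPP A T P S w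
  + 2*da*dt*FAT A T P S w + 2*da*dp*FAP A T P S w + 2*dt*dp*FTP A T P S w.

Lemma gg_d t : is_derive gg t (gg1 t).
Proof.
  unfold gg, gg1, FV, FA, FT, FP, dot2, Rot_gen, dRot_gen, M_gen, Mt_gen, Mp_gen; cbn [fst snd].
  auto_derive; [trivial | ring].
Qed.
Lemma gg1_d t : is_derive gg1 t (gg2 t).
Proof.
  unfold gg1, gg2, FV, FA, FT, FP, FAT, FAP, FTT, FTP, FPP, dot2, Rot_gen, dRot_gen, M_gen, Mt_gen, Mp_gen, Mtt_gen, Mtp_gen, Mpp_gen; cbn [fst snd].
  auto_derive; [trivial | ring].
Qed.
End D.


Definition dot3 (r S : vec3) := v3x r * v3x S + v3y r * v3y S + v3z r * v3z S.
Definition nsq (r : vec3) := v3x r ^ 2 + v3y r ^ 2 + v3z r ^ 2.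

Lemma cs3 (r S : vec3) : (dot3 r S) ^ 2 <= nsq r * nsq S.
Proof.
  unfold dot3, nsq.
  assert (E : (v3x r ^ 2 + v3y r ^ 2 + v3z r ^ 2) * (v3x S ^ 2 + v3y S ^ 2 + v3z S ^ 2)
     - (v3x r * v3x S + v3y r * v3y S + v3z r * v3z S) ^ 2
     = (v3x r * v3y S - v3y r * v3x S)^2 + (v3x r * v3z S - v3z r * v3x S)^2
       + (v3y r * v3z S - v3z r * v3y S)^2) by ring.
  assert (0 <= (v3x r * v3y S - v3y r * v3x S)^2 + (v3x r * v3z S - v3z r * v3x S)^2
       + (v3y r * v3z S - v3z r * v3y S)^2) by (repeat apply Rplus_le_le_0_compat; apply pow2_ge_0).
  lra.
Qed.

Lemma norm3_nsq S : norm3 S = sqrt (nsq S).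
Proof. reflexivity. Qed.

Lemma abs_le_sqrt x N : 0 <= N -> x ^ 2 <= N -> Rabs x <= sqrt N.
Proof.
  intros HN H. rewrite <- sqrt_Rsqr_abs. apply sqrt_le_1_alt.
  rewrite Rsqr_pow2; exact H.
Qed.

Lemma form_bound (u1 u2 : R) (r1 r2 S : vec3) :
  u1 ^ 2 + u2 ^ 2 = 1 -> nsq r1 <= 1 -> nsq r2 <= 1 -> dot3 r1 r2 = 0 ->
  Rabs (u1 * dot3 r1 S + u2 * dot3 r2 S) <= norm3 S.
Proof.
  intros Hu H1 H2 H12.
  set (v := (u1 * v3x r1 + u2 * v3x r2, u1 * v3y r1 + u2 * v3y r2, u1 * v3z r1 + u2 * v3z r2) : vec3).
  assert (E : u1 * dot3 r1 S + u2 * dot3 r2 S = dot3 v S) by (unfold v, dot3, v3x, v3y, v3z; simpl; ring).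
  assert (Nv : nsq v <= 1).
  { assert (E2 : nsq v = u1^2 * nsq r1 + u2^2 * nsq r2 + 2*u1*u2*dot3 r1 r2)
      by (unfold v, nsq, dot3, v3x, v3y, v3z; simpl; ring).
    rewrite E2, H12. assert (0 <= u1^2) by apply pow2_ge_0. assert (0 <= u2^2) by apply pow2_ge_0.
    nra. }
  rewrite E, norm3_nsq. apply abs_le_sqrt.
  unfold nsq; pose proof (pow2_ge_0 (v3x S)); pose proof (pow2_ge_0 (v3y S)); pose proof (pow2_ge_0 (v3z S)); lra.
  pose proof (cs3 v S). assert (0 <= nsq S) by (unfold nsq; pose proof (pow2_ge_0 (v3x S)); pose proof (pow2_ge_0 (v3y S)); pose proof (pow2_ge_0 (v3z S)); lra). nra.
Qed.

Lemma sc1 x : sin x ^ 2 + cos x ^ 2 = 1.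
Proof. pose proof (sin2_cos2 x). unfold Rsqr in H. lra. Qed.

Definition rows (m : vec3 -> vec2) (r1 r2 : vec3) :=
  (forall S, m S = (dot3 r1 S, dot3 r2 S)) /\ nsq r1 <= 1 /\ nsq r2 <= 1 /\ dot3 r1 r2 = 0.

Lemma rot_bound (m : vec3 -> vec2) r1 r2 a (w : vec2) S S' :
  rows m r1 r2 -> fst w ^ 2 + snd w ^ 2 = 1 ->
  Rabs (dot2 (Rot_gen sin cos a (m S)) w - dot2 (Rot_gen sin cos a (m S')) w) <= norm3 (sub3 S S') /\
  Rabs (dot2 (dRot_gen sin cos a (m S)) w - dot2 (dRot_gen sin cos a (m S')) w) <= norm3 (sub3 S S').
Proof.
  intros [Hm [H1 [H2 H12]]] Hw.
  pose proof (sc1 a) as Ha.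
  rewrite !Hm. unfold dot2, Rot_gen, dRot_gen; cbn [fst snd]. split.
  - replace (_ - _) with ((cos a * fst w + sin a * snd w) * dot3 r1 (sub3 S S')
        + (- sin a * fst w + cos a * snd w) * dot3 r2 (sub3 S S'))
      by (unfold dot3, sub3, v3x, v3y, v3z; cbn [fst snd]; ring).
    apply form_bound; auto.
    replace 1 with ((sin a ^ 2 + cos a ^ 2) * (fst w ^ 2 + snd w ^ 2)) by (rewrite Ha, Hw; ring). ring.
  - replace (_ - _) with ((- sin a * fst w + cos a * snd w) * dot3 r1 (sub3 S S')
        + (- cos a * fst w - sin a * snd w) * dot3 r2 (sub3 S S'))
      by (unfold dot3, sub3, v3x, v3y, v3z; cbn [fst snd]; ring).
    apply form_bound; auto.
    replace 1 with ((sin a ^ 2 + cos a ^ 2) * (fst w ^ 2 + snd w ^ 2)) by (rewrite Ha, Hw; ring). ring.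
Qed.

Lemma sub3_0 S : sub3 S (0,0,0) = S.
Proof. destruct S as [[x y] z]; unfold sub3, v3x, v3y, v3z; cbn; f_equal; [f_equal|]; ring. Qed.

Lemma rot_bound0 (m : vec3 -> vec2) r1 r2 a (w : vec2) S :
  rows m r1 r2 -> fst w ^ 2 + snd w ^ 2 = 1 ->
  Rabs (dot2 (Rot_gen sin cos a (m S)) w) <= norm3 S /\
  Rabs (dot2 (dRot_gen sin cos a (m S)) w) <= norm3 S.
Proof.
  intros Hr Hw. destruct (rot_bound m r1 r2 a w S (0,0,0) Hr Hw) as [A B].
  rewrite sub3_0 in A, B. destruct Hr as [Hm _].
  rewrite !Hm in A, B. rewrite !Hm.
  unfold dot2, Rot_gen, dRot_gen, dot3, v3x, v3y, v3z in *; cbn [fst snd] in *.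
  split; [revert A | revert B]; match goal with |- Rabs ?a <= _ -> Rabs ?b <= _ => replace a with b in * by ring end; auto.
Qed.

Ltac rows_tac t p := split; [intro S; unfold M_gen, Mt_gen, Mp_gen, Mtt_gen, Mtp_gen, Mpp_gen, dot3, v3x, v3y, v3z; cbn; apply pair_equal_spec; split; ring | unfold nsq, dot3, v3x, v3y, v3z; cbn;
  (
    let h1 := fresh in let h2 := fresh in
    pose proof (sc1 t) as h1; pose proof (sc1 p) as h2;
    assert (cos p ^ 2 * (sin t ^ 2 + cos t ^ 2) = cos p ^ 2) by (rewrite h1; ring);
    assert (sin p ^ 2 * (sin t ^ 2 + cos t ^ 2) = sin p ^ 2) by (rewrite h1; ring);
    pose proof (pow2_ge_0 (sin t)); pose proof (pow2_ge_0 (cos t));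
    pose proof (pow2_ge_0 (sin p)); pose proof (pow2_ge_0 (cos p)));
  repeat split; lra].

Lemma rows_M t p : rows (M_gen sin cos t p)
  (- sin t, cos t, 0) (- cos t * cos p, - sin t * cos p, sin p).
Proof. rows_tac t p. Qed.
Lemma rows_Mt t p : rows (Mt_gen sin cos t p)
  (- cos t, - sin t, 0) (sin t * cos p, - cos t * cos p, 0).
Proof. rows_tac t p. Qed.
Lemma rows_Mp t p : rows (Mp_gen sin cos t p)
  (0, 0, 0) (cos t * sin p, sin t * sin p, cos p).
Proof. rows_tac t p. Qed.

Lemma rows_Mtt t p : rows (Mtt_gen sin cos t p)
  (sin t, - cos t, 0) (cos t * cos p, sin t * cos p, 0).
Proof. rows_tac t p. Qed.
Lemma rows_Mtp t p : rows (Mtp_gen sin cos t p)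
  (0, 0, 0) (- sin t * sin p, cos t * sin p, 0).
Proof. rows_tac t p. Qed.
Lemma rows_Mpp t p : rows (Mpp_gen sin cos t p)
  (0, 0, 0) (cos t * cos p, sin t * cos p, - sin p).
Proof. rows_tac t p. Qed.

Lemma tb c X N : Rabs X <= N -> Rabs (c * X) <= Rabs c * N.
Proof. intro H. rewrite Rabs_mult. apply Rmult_le_compat_l; [apply Rabs_pos | exact H]. Qed.

Lemma abs6 a b c d e f : Rabs (a + b + c + d + e + f) <= Rabs a + Rabs b + Rabs c + Rabs d + Rabs e + Rabs f.
Proof.
  repeat (eapply Rle_trans; [apply Rabs_triang|]; apply Rplus_le_compat_r). lra.
Qed.

Lemma FV_bounds a t p S w : fst w ^ 2 + snd w ^ 2 = 1 ->
  let N := norm3 S in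
  Rabs (FV a t p S w) <= N /\ Rabs (FA a t p S w) <= N /\ Rabs (FT a t p S w) <= N /\
  Rabs (FP a t p S w) <= N /\ Rabs (FAT a t p S w) <= N /\ Rabs (FAP a t p S w) <= N /\
  Rabs (FTT a t p S w) <= N /\ Rabs (FTP a t p S w) <= N /\ Rabs (FPP a t p S w) <= N.
Proof.
  intros Hw N.
  destruct (rot_bound0 _ _ _ a w S (rows_M t p) Hw).
  destruct (rot_bound0 _ _ _ a w S (rows_Mt t p) Hw).
  destruct (rot_bound0 _ _ _ a w S (rows_Mp t p) Hw).
  destruct (rot_bound0 _ _ _ a w S (rows_Mtt t p) Hw).
  destruct (rot_bound0 _ _ _ a w S (rows_Mtp t p) Hw).
  destruct (rot_bound0 _ _ _ a w S (rows_Mpp t p) Hw).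
  unfold FV, FA, FT, FP, FAT, FAP, FTT, FTP, FPP; tauto.
Qed.

Lemma taylorF a th ph da dt dp S w : fst w ^ 2 + snd w ^ 2 = 1 ->
  Rabs (FV (a + da) (th + dt) (ph + dp) S w - FV a th ph S w
        - (da * FA a th ph S w + dt * FT a th ph S w + dp * FP a th ph S w))
  <= (Rabs da + Rabs dt + Rabs dp) ^ 2 * norm3 S / 2.
Proof.
  intro Hw.
  assert (H := taylor1 (gg a th ph da dt dp S w) (gg1 a th ph da dt dp S w) (gg2 a th ph da dt dp S w)
     ((Rabs da + Rabs dt + Rabs dp) ^ 2 * norm3 S) (gg_d a th ph da dt dp S w) (gg1_d a th ph da dt dp S w)).
  unfold gg, gg1 in H. rewrite !Rmult_1_l, !Rmult_0_l, !Rplus_0_r in H.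
  apply H. intros t _. unfold gg2.
  set (A := a + t * da); set (T := th + t * dt); set (P := ph + t * dp).
  destruct (FV_bounds A T P S w Hw) as [h1 [_ [_ [_ [h5 [h6 [h7 [h8 h9]]]]]]]].
  rewrite <- Rabs_Ropp in h1.
  pose proof (tb (da*da) _ _ h1). pose proof (tb (dt*dt) _ _ h7). pose proof (tb (dp*dp) _ _ h9).
  pose proof (tb (2*da*dt) _ _ h5). pose proof (tb (2*da*dp) _ _ h6). pose proof (tb (2*dt*dp) _ _ h8).
  rewrite !Rabs_mult, (Rabs_right 2) in * by lra.
  set (N := norm3 S) in *.
  eapply Rle_trans; [apply abs6|]. rewrite !Rabs_mult, (Rabs_right 2) by lra. lra.
Qed.


Fixpoint zfact (n : nat) : Z := match n with O => 1%Z | S m => (Z.of_nat (S m) * zfact m)%Z end.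
Lemma INR_fact_z n : INR (fact n) = IZR (zfact n).
Proof.
  induction n. reflexivity.
  change (fact (S n)) with (S n * fact n)%nat. rewrite mult_INR, IHn.
  change (zfact (S n)) with (Z.of_nat (S n) * zfact n)%Z. rewrite mult_IZR, <- INR_IZR_INZ. reflexivity.
Qed.

Definition delta : R := 112 / 10000000000000.

Lemma num26 : 4 ^ 26 / INR (fact 26) <= delta.
Proof.
  rewrite INR_fact_z. unfold delta. 
  replace (zfact 26) with 403291461126605635584000000%Z by (vm_compute; reflexivity).
  lra.
Qed.
Lemma num27 : 4 ^ 27 / INR (fact 27) <= delta.
Proof.
  rewrite INR_fact_z. unfold delta. 
  replace (zfact 27) with 10888869450418352160768000000%Z by (vm_compute; reflexivity).
  lra.
Qed.

Lemma d_mono n x : is_derive (fun y => y ^ S n / INR (fact (S n))) x (x ^ n / INR (fact n)).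
Proof.
  auto_derive. trivial.
  change (match n with 0%nat => 1 | S _ => INR n + 1 end) with (INR (S n)).
  rewrite plus_INR, mult_INR, S_INR.
  pose proof (INR_fact_neq_0 n). pose proof (pos_INR n).
  field. split; [auto|]. intro; nra.
Qed.

Lemma d_cos_term k x : is_derive (fun y => cos_term y (S k)) x (- sin_term x k).
Proof.
  unfold cos_term, sin_term.
  replace (2 * S k)%nat with (S (2 * k + 1)) by lia.

  replace (- ((-1) ^ k * (x ^ (2 * k + 1) / INR (fact (2 * k + 1))))) with ((-1) ^ S k * (x ^ (2 * k + 1) / INR (fact (2 * k + 1)))) by (simpl; ring).
  apply is_derive_Reals.
  apply (derivable_pt_lim_scal (fun y => y ^ S (2 * k + 1) / INR (fact (S (2 * k + 1))))).
  apply is_derive_Reals, d_mono.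
Qed.

Lemma d_cos_term0 x : is_derive (fun y => cos_term y 0) x 0.
Proof. unfold cos_term. auto_derive; [trivial | ring]. Qed.

Lemma d_cos_approx m x : is_derive (fun y => cos_approx y (S m)) x (- sin_approx x m).
Proof.
  induction m.
  - apply is_derive_Reals.
    change (fun y => cos_approx y 1) with (plus_fct (fun y => cos_term y 0) (fun y => cos_term y 1)).
    replace (- sin_approx x 0) with (0 + - sin_term x 0) by (unfold sin_approx; simpl; ring).
    apply derivable_pt_lim_plus; apply is_derive_Reals; [apply d_cos_term0 | apply d_cos_term].
  - apply is_derive_Reals.
    change (fun y => cos_approx y (S (S m))) with (plus_fct (fun y => cos_approx y (S m)) (fun y => cos_term y (S (S m)))).
    replace (- sin_approx x (S m)) with (- sin_approx x m + - sin_term x (S m)) by (unfold sin_approx; simpl; ring).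
    apply derivable_pt_lim_plus; apply is_derive_Reals; [apply IHm | apply d_cos_term].
Qed.

Lemma mono0 (h dh : R -> R) x : 0 <= x -> (forall t, is_derive h t (dh t)) ->
  (forall t, 0 <= t <= x -> 0 <= dh t) -> h 0 <= h x.
Proof.
  intros Hx Hd Hp. destruct (mvt01 h dh 0 x Hx Hd) as [c [Hc E]].
  pose proof (Hp c Hc). nra.
Qed.

Lemma cos_approx_0 n : cos_approx 0 n = 1.
Proof.
  induction n.
  - unfold cos_approx, cos_term. simpl. field.
  - unfold cos_approx in *. simpl sum_f_R0 at 1. rewrite IHn. unfold cos_term.
    rewrite pow_i by lia. unfold Rdiv; ring.
Qed.

Lemma cos_bounds_pos x : 0 <= x <= 4 -> cos_approx x 13 <= cos x <= cos_approx x 12.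
Proof.
  intro Hx. split.
  - assert (H := mono0 (fun y => cos y - cos_approx y 13) (fun y => - sin y + sin_approx y 12) x (proj1 Hx)).
    cbv beta in H. 
    assert (E : cos 0 - cos_approx 0 13 = 0) by (rewrite cos_0, cos_approx_0; ring).
    rewrite E in H. cut (0 <= cos x - cos_approx x 13). lra. apply H.
    + intro t. apply is_derive_Reals.
      change (fun y => cos y - cos_approx y 13) with (minus_fct cos (fun y => cos_approx y 13)).
      replace (- sin t + sin_approx t 12) with (- sin t - - sin_approx t 12) by ring.
      apply derivable_pt_lim_minus; [apply derivable_pt_lim_cos | apply is_derive_Reals, d_cos_approx].
    + intros t Ht. pose proof (pre_sin_bound t 5 (proj1 Ht) ltac:(lra)). simpl in H0. lra.
  - assert (H := mono0 (fun y => cos_approx y 12 - cos y) (fun y => - sin_approx y 11 + sin y) x (proj1 Hx)).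
    cbv beta in H. 
    assert (E : cos_approx 0 12 - cos 0 = 0) by (rewrite cos_0, cos_approx_0; ring).
    rewrite E in H. cut (0 <= cos_approx x 12 - cos x). lra. apply H.
    + intro t. apply is_derive_Reals.
      change (fun y => cos_approx y 12 - cos y) with (minus_fct (fun y => cos_approx y 12) cos).
      replace (- sin_approx t 11 + sin t) with (- sin_approx t 11 - - sin t) by ring.
      apply derivable_pt_lim_minus; [apply is_derive_Reals, d_cos_approx | apply derivable_pt_lim_cos].
    + intros t Ht. pose proof (pre_sin_bound t 5 (proj1 Ht) ltac:(lra)). simpl in H0. lra.
Qed.

Lemma pow_even_opp x i : (- x) ^ (2 * i) = x ^ (2 * i).
Proof. rewrite !pow_mult. f_equal. ring. Qed.

Lemma cos_approx_opp x n : cos_approx (- x) n = cos_approx x n.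
Proof. unfold cos_approx. apply sum_eq. intros i _. unfold cos_term. rewrite pow_even_opp. reflexivity. Qed.

Lemma sin_term_opp x i : sin_term (- x) i = - sin_term x i.
Proof. unfold sin_term. rewrite !pow_add, pow_even_opp. set (A := x ^ (2 * i)). unfold Rdiv. ring. Qed.

Lemma sin_approx_opp x n : sin_approx (- x) n = - sin_approx x n.
Proof.
  unfold sin_approx. induction n as [|n IHn]; cbn [sum_f_R0].
  - apply sin_term_opp.
  - rewrite IHn, sin_term_opp. ring.
Qed.

Lemma sinQ_eq x : sinQ x = sin_approx x 12.
Proof. unfold sinQ, sin_approx. apply sum_eq. intros i _. unfold sin_term, Rdiv. ring. Qed.
Lemma cosQ_eq x : cosQ x = cos_approx x 12.
Proof. unfold cosQ, cos_approx. apply sum_eq. intros i _. unfold cos_term, Rdiv. ring. Qed.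

Lemma sin_err_pos x : 0 <= x <= 4 -> Rabs (sin x - sin_approx x 12) <= delta.
Proof.
  intro Hx. pose proof (pre_sin_bound x 6 (proj1 Hx) (proj2 Hx)) as [A _].
  pose proof (pre_sin_bound x 5 (proj1 Hx) (proj2 Hx)) as [_ B].
  change (2 * 6 + 1)%nat with 13%nat in A. change (2 * (5 + 1))%nat with 12%nat in B.
  change (sin_approx x 13) with (sin_approx x 12 + sin_term x 13) in A.
  unfold sin_term in A. change (2 * 13 + 1)%nat with 27%nat in A.
  replace ((-1) ^ 13) with (-1) in A by ring.
  assert (x ^ 27 <= 4 ^ 27) by (apply pow_incr; lra).
  pose proof num27. pose proof (INR_fact_lt_0 27).
  assert (x ^ 27 / INR (fact 27) <= 4 ^ 27 / INR (fact 27)) by (apply Rmult_le_compat_r; [left; apply Rinv_0_lt_compat; lra | lra]).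
  apply Rabs_le_between. lra.
Qed.

Lemma cos_err_pos x : 0 <= x <= 4 -> Rabs (cos x - cos_approx x 12) <= delta.
Proof.
  intro Hx. pose proof (cos_bounds_pos x Hx) as [A B].
  change (cos_approx x 13) with (cos_approx x 12 + cos_term x 13) in A.
  unfold cos_term in A. change (2 * 13)%nat with 26%nat in A.
  replace ((-1) ^ 13) with (-1) in A by ring.
  assert (x ^ 26 <= 4 ^ 26) by (apply pow_incr; lra).
  pose proof num26. pose proof (INR_fact_lt_0 26).
  assert (x ^ 26 / INR (fact 26) <= 4 ^ 26 / INR (fact 26)) by (apply Rmult_le_compat_r; [left; apply Rinv_0_lt_compat; lra | lra]).
  apply Rabs_le_between. lra.
Qed.

Lemma sin_err x : -4 <= x <= 4 -> Rabs (sin x - sinQ x) <= delta.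
Proof.
  intro Hx. rewrite sinQ_eq. destruct (Rle_dec 0 x).
  - apply sin_err_pos; lra.
  - replace x with (- (- x)) by ring. rewrite sin_neg, sin_approx_opp.
    replace (- sin (- x) - - sin_approx (- x) 12) with (- (sin (- x) - sin_approx (- x) 12)) by ring.
    rewrite Rabs_Ropp. apply sin_err_pos; lra.
Qed.

Lemma cos_err x : -4 <= x <= 4 -> Rabs (cos x - cosQ x) <= delta.
Proof.
  intro Hx. rewrite cosQ_eq. destruct (Rle_dec 0 x).
  - apply cos_err_pos; lra.
  - replace x with (- (- x)) by ring. rewrite cos_neg, cos_approx_opp.
    apply cos_err_pos; lra.
Qed.


Definition near (m e x x' : R) := Rabs x <= m /\ Rabs (x - x') <= e.

Lemma near_mul m1 e1 x x' m2 e2 y y' : near m1 e1 x x' -> near m2 e2 y y' ->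
  near (m1 * m2) (m1 * e2 + e1 * m2 + e1 * e2) (x * y) (x' * y').
Proof.
  intros [A B] [C D]. split.
  - rewrite Rabs_mult. apply Rmult_le_compat; auto using Rabs_pos.
  - replace (x * y - x' * y') with (x * (y - y') + (x - x') * y - (x - x') * (y - y')) by ring.
    unfold Rminus at 1. eapply Rle_trans; [apply Rabs_triang|].
    eapply Rle_trans; [apply Rplus_le_compat_r, Rabs_triang|].
    rewrite Rabs_Ropp, !Rabs_mult.
    pose proof (Rabs_pos x); pose proof (Rabs_pos y); pose proof (Rabs_pos (x - x')); pose proof (Rabs_pos (y - y')).
    apply Rplus_le_compat; [apply Rplus_le_compat|]; apply Rmult_le_compat; auto.
Qed.

Lemma near_add m1 e1 x x' m2 e2 y y' : near m1 e1 x x' -> near m2 e2 y y' ->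
  near (m1 + m2) (e1 + e2) (x + y) (x' + y').
Proof.
  intros [A B] [C D]. split.
  - eapply Rle_trans; [apply Rabs_triang|lra].
  - replace (x + y - (x' + y')) with ((x - x') + (y - y')) by ring.
    eapply Rle_trans; [apply Rabs_triang|lra].
Qed.

Lemma near_opp m e x x' : near m e x x' -> near m e (- x) (- x').
Proof.
  intros [A B]. split. rewrite Rabs_Ropp; auto.
  replace (- x - - x') with (- (x - x')) by ring. rewrite Rabs_Ropp; auto.
Qed.

Lemma near_sub m1 e1 x x' m2 e2 y y' : near m1 e1 x x' -> near m2 e2 y y' ->
  near (m1 + m2) (e1 + e2) (x - y) (x' - y').
Proof. intros A B. apply near_add; auto. apply near_opp; auto. Qed.

Lemma near_0 : near 0 0 0 0.
Proof. split; rewrite ?Rminus_0_r, Rabs_R0; lra. Qed.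

Lemma near_fin m e b x x' : near m e x x' -> e <= b -> Rabs (x - x') <= b.
Proof. intros [_ A] B; lra. Qed.

Ltac near_tac := first
  [ eassumption
  | apply near_0
  | eapply near_mul; near_tac
  | eapply near_sub; near_tac
  | eapply near_add; near_tac
  | eapply near_opp; near_tac ].

Section Err.
Variables (sn cs sn' cs' : R -> R) (a t p : R) (S : vec3) (w : vec2).
Hypotheses (hsa : near 1 delta (sn a) (sn' a)) (hca : near 1 delta (cs a) (cs' a))
  (hst : near 1 delta (sn t) (sn' t)) (hct : near 1 delta (cs t) (cs' t))
  (hsp : near 1 delta (sn p) (sn' p)) (hcp : near 1 delta (cs p) (cs' p))
  (hx : near (1 + kappa) 0 (v3x S) (v3x S)) (hy : near (1 + kappa) 0 (v3y S) (v3y S))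
  (hz : near (1 + kappa) 0 (v3z S) (v3z S))
  (hw1 : near 1 0 (fst w) (fst w)) (hw2 : near 1 0 (snd w) (snd w)).

Ltac err_tac := unfold dot2, Rot_gen, dRot_gen, M_gen, Mt_gen, Mp_gen; cbn [fst snd];
  eapply near_fin; [near_tac | unfold delta, kappa; lra].

Lemma errG0 : Rabs (dot2 (Rot_gen sn cs a (M_gen sn cs t p S)) w - dot2 (Rot_gen sn' cs' a (M_gen sn' cs' t p S)) w) <= 3 * kappa.
Proof using All. err_tac. Qed.
Lemma errGa : Rabs (dot2 (dRot_gen sn cs a (M_gen sn cs t p S)) w - dot2 (dRot_gen sn' cs' a (M_gen sn' cs' t p S)) w) <= 3 * kappa.
Proof using All. err_tac. Qed.
Lemma errGt : Rabs (dot2 (Rot_gen sn cs a (Mt_gen sn cs t p S)) w - dot2 (Rot_gen sn' cs' a (Mt_gen sn' cs' t p S)) w) <= 3 * kappa.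
Proof using All. err_tac. Qed.
Lemma errGp : Rabs (dot2 (Rot_gen sn cs a (Mp_gen sn cs t p S)) w - dot2 (Rot_gen sn' cs' a (Mp_gen sn' cs' t p S)) w) <= 3 * kappa.
Proof using All. err_tac. Qed.
Lemma errH0 : Rabs (dot2 (M_gen sn cs t p S) w - dot2 (M_gen sn' cs' t p S) w) <= 2 * kappa.
Proof using All. err_tac. Qed.
Lemma errHt : Rabs (dot2 (Mt_gen sn cs t p S) w - dot2 (Mt_gen sn' cs' t p S) w) <= 2 * kappa.
Proof using All. err_tac. Qed.
Lemma errHp : Rabs (dot2 (Mp_gen sn cs t p S) w - dot2 (Mp_gen sn' cs' t p S) w) <= 2 * kappa.
Proof using All. err_tac. Qed.
End Err.


Lemma rot0 (v w : vec2) : dot2 (Rot_gen sin cos 0 v) w = dot2 v w.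
Proof. unfold dot2, Rot_gen; cbn [fst snd]. rewrite sin_0, cos_0. ring. Qed.

Lemma comp_le v : Rabs (v3x v) <= norm3 v /\ Rabs (v3y v) <= norm3 v /\ Rabs (v3z v) <= norm3 v.
Proof.
  unfold norm3.
  pose proof (pow2_ge_0 (v3x v)); pose proof (pow2_ge_0 (v3y v)); pose proof (pow2_ge_0 (v3z v)).
  repeat split; apply abs_le_sqrt; lra.
Qed.

Lemma near_S (S St : vec3) : norm3 S <= 1 -> norm3 (sub3 S St) <= kappa ->
  near (1 + kappa) 0 (v3x St) (v3x St) /\ near (1 + kappa) 0 (v3y St) (v3y St) /\
  near (1 + kappa) 0 (v3z St) (v3z St).
Proof.
  intros A B. destruct (comp_le S) as [x1 [y1 z1]]. destruct (comp_le (sub3 S St)) as [x2 [y2 z2]].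
  change (v3x (sub3 S St)) with (v3x S - v3x St) in x2.
  change (v3y (sub3 S St)) with (v3y S - v3y St) in y2.
  change (v3z (sub3 S St)) with (v3z S - v3z St) in z2.
  set (N := norm3 (sub3 S St)) in *.
  unfold near, v3x, v3y, v3z in *. rewrite !Rminus_diag, Rabs_R0.
  repeat split; try lra.
  - replace (fst (fst St)) with (fst (fst S) - (fst (fst S) - fst (fst St))) by ring.
    eapply Rle_trans; [apply Rabs_triang|]. rewrite Rabs_Ropp. lra.
  - replace (snd (fst St)) with (snd (fst S) - (snd (fst S) - snd (fst St))) by ring.
    eapply Rle_trans; [apply Rabs_triang|]. rewrite Rabs_Ropp. lra.
  - replace (snd St) with (snd S - (snd S - snd St)) by ring.
    eapply Rle_trans; [apply Rabs_triang|]. rewrite Rabs_Ropp. lra.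
Qed.

Lemma near_trig u : -4 <= u <= 4 -> near 1 delta (sin u) (sinQ u) /\ near 1 delta (cos u) (cosQ u).
Proof.
  intro Hu. split; split.
  - apply Rabs_le, SIN_bound.
  - apply sin_err; auto.
  - apply Rabs_le, COS_bound.
  - apply cos_err; auto.
Qed.

Lemma rsum_lin n (l f g : nat -> R) c d :
  rsum n (fun j => l j * f j) * c + rsum n (fun j => l j * g j) * d
  = rsum n (fun j => l j * (f j * c + g j * d)).
Proof. induction n; cbn [rsum]. ring. rewrite <- IHn. ring. Qed.

Lemma conv_strict n (l q : nat -> R) c :
  (forall j, (j < n)%nat -> 0 <= l j) -> (forall j, (j < n)%nat -> q j < c) ->
  rsum n (fun j => l j * q j) <= c * rsum n l /\ 0 <= rsum n l /\
  (0 < rsum n l -> rsum n (fun j => l j * q j) < c * rsum n l).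
Proof.
  induction n; intros Hl Hq; cbn [rsum].
  - lra.
  - destruct IHn as [A [B C]]; [intros; apply Hl; lia | intros; apply Hq; lia |].
    assert (L := Hl n ltac:(lia)). assert (Q := Hq n ltac:(lia)).
    destruct L as [L|L].
    + assert (l n * q n < l n * c) by (apply Rmult_lt_compat_l; auto).
      repeat split; intros; nra.
    + rewrite <- L. repeat split; intros; nra.
Qed.

Theorem theorem6p7 (n : nat) (P Pt : nat -> vec3) (s : nat)
  (eps t1 p1 t2 p2 a : R) (w : vec2) :
  polyhedron n P -> pointsymmetric n P -> radius_one n P ->
  kappa_rat_approx n P Pt ->
  (s < n)%nat ->
  0 < eps ->
  is_rat t1 -> is_rat p1 -> is_rat t2 -> is_rat p2 -> is_rat a ->
  -4 <= t1 <= 4 -> -4 <= p1 <= 4 -> -4 <= t2 <= 4 -> -4 <= p2 <= 4 -> -4 <= a <= 4 ->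
  is_rat2 w -> fst w ^ 2 + snd w ^ 2 = 1 ->
  (forall i, (i < n)%nat -> HQ eps t2 p2 w (Pt i) < GQ eps t1 p1 a (Pt s) w) ->
  ~ exists th1 ph1 th2 ph2 al : R,
      Rabs (th1 - t1) <= eps /\ Rabs (ph1 - p1) <= eps /\
      Rabs (th2 - t2) <= eps /\ Rabs (ph2 - p2) <= eps /\
      Rabs (al - a) <= eps /\
      forall i, (i < n)%nat ->
        in_int_conv2 n (fun j => Mmat th2 ph2 (P j)) (Rot al (Mmat th1 ph1 (P i))).
Proof.
  intros _ _ [Hrad _] Happ Hs Heps _ _ _ _ _ Ht1 Hp1 Ht2 Hp2 Ha _ Hw HGH
    [th1 [ph1 [th2 [ph2 [al [E1 [E2 [E3 [E4 [E5 Hin]]]]]]]]]].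
  assert (Hk : 0 < kappa) by (unfold kappa; apply Rinv_0_lt_compat; apply pow_lt; lra).
  assert (Hw1 : near 1 0 (fst w) (fst w)).
  { split; [|rewrite Rminus_diag, Rabs_R0; lra]. rewrite <- sqrt_1. apply abs_le_sqrt; try lra.
    pose proof (pow2_ge_0 (snd w)); lra. }
  assert (Hw2 : near 1 0 (snd w) (snd w)).
  { split; [|rewrite Rminus_diag, Rabs_R0; lra]. rewrite <- sqrt_1. apply abs_le_sqrt; try lra.
    pose proof (pow2_ge_0 (fst w)); lra. }
  destruct (near_trig a Ha) as [sa ca]. destruct (near_trig t1 Ht1) as [st1 ct1].
  destruct (near_trig p1 Hp1) as [sp1 cp1]. destruct (near_trig t2 Ht2) as [st2 ct2].
  destruct (near_trig p2 Hp2) as [sp2 cp2].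
  set (S := P s). set (St := Pt s).
  assert (HS : norm3 S <= 1) by (apply Hrad; auto).
  assert (HSt : norm3 (sub3 S St) <= kappa) by (apply Happ; auto).
  assert (HS0 : 0 <= norm3 S) by apply sqrt_pos.
  destruct (near_S S St HS HSt) as [nx [ny nz]].
  assert (Key1 : GQ eps t1 p1 a St w <= FV al th1 ph1 S w).
  { pose proof (taylorF a t1 p1 (al - a) (th1 - t1) (ph1 - p1) S w Hw) as T.
    replace (a + (al - a)) with al in T by ring.
    replace (t1 + (th1 - t1)) with th1 in T by ring.
    replace (p1 + (ph1 - p1)) with ph1 in T by ring.
    set (da := al - a) in *. set (dt := th1 - t1) in *. set (dp := ph1 - p1) in *.
    assert (Hd : (Rabs da + Rabs dt + Rabs dp) ^ 2 * norm3 S / 2 <= 9 / 2 * eps ^ 2).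
    { pose proof (Rabs_pos da); pose proof (Rabs_pos dt); pose proof (Rabs_pos dp).
      assert ((Rabs da + Rabs dt + Rabs dp) ^ 2 <= (3 * eps) ^ 2) by (apply pow_incr; lra).
      assert (0 <= (Rabs da + Rabs dt + Rabs dp) ^ 2) by apply pow2_ge_0.
      nra. }
    destruct (rot_bound _ _ _ a w S St (rows_M t1 p1) Hw) as [kV kA].
    destruct (rot_bound _ _ _ a w S St (rows_Mt t1 p1) Hw) as [kT _].
    destruct (rot_bound _ _ _ a w S St (rows_Mp t1 p1) Hw) as [kP _].
    pose proof (errG0 sin cos sinQ cosQ a t1 p1 St w sa ca st1 ct1 sp1 cp1 nx ny nz Hw1 Hw2) as qV.
    pose proof (errGa sin cos sinQ cosQ a t1 p1 St w sa ca st1 ct1 sp1 cp1 nx ny nz Hw1 Hw2) as qA.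
    pose proof (errGt sin cos sinQ cosQ a t1 p1 St w sa ca st1 ct1 sp1 cp1 nx ny nz Hw1 Hw2) as qT.
    pose proof (errGp sin cos sinQ cosQ a t1 p1 St w sa ca st1 ct1 sp1 cp1 nx ny nz Hw1 Hw2) as qP.
    unfold GQ, RotQ, dRotQ, MQ, MtQ, MpQ.
    unfold FV, FA, FT, FP in T.
    set (V := dot2 (Rot_gen sin cos a (M_gen sin cos t1 p1 S)) w) in *.
    set (A := dot2 (dRot_gen sin cos a (M_gen sin cos t1 p1 S)) w) in *.
    set (Tt := dot2 (Rot_gen sin cos a (Mt_gen sin cos t1 p1 S)) w) in *.
    set (Pp := dot2 (Rot_gen sin cos a (Mp_gen sin cos t1 p1 S)) w) in *.
    set (V' := dot2 (Rot_gen sin cos a (M_gen sin cos t1 p1 St)) w) in *.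
    set (A' := dot2 (dRot_gen sin cos a (M_gen sin cos t1 p1 St)) w) in *.
    set (Tt' := dot2 (Rot_gen sin cos a (Mt_gen sin cos t1 p1 St)) w) in *.
    set (Pp' := dot2 (Rot_gen sin cos a (Mp_gen sin cos t1 p1 St)) w) in *.
    set (VQ := dot2 (Rot_gen sinQ cosQ a (M_gen sinQ cosQ t1 p1 St)) w) in *.
    set (AQ := dot2 (dRot_gen sinQ cosQ a (M_gen sinQ cosQ t1 p1 St)) w) in *.
    set (TQ := dot2 (Rot_gen sinQ cosQ a (Mt_gen sinQ cosQ t1 p1 St)) w) in *.
    set (PQ := dot2 (Rot_gen sinQ cosQ a (Mp_gen sinQ cosQ t1 p1 St)) w) in *.
    assert (bA : Rabs (da * A) <= eps * (Rabs AQ + 4 * kappa)).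
    { rewrite Rabs_mult. apply Rmult_le_compat; try apply Rabs_pos; auto.
      pose proof (Rabs_triang_inv A A'); pose proof (Rabs_triang_inv A' AQ). lra. }
    assert (bT : Rabs (dt * Tt) <= eps * (Rabs TQ + 4 * kappa)).
    { rewrite Rabs_mult. apply Rmult_le_compat; try apply Rabs_pos; auto.
      pose proof (Rabs_triang_inv Tt Tt'); pose proof (Rabs_triang_inv Tt' TQ). lra. }
    assert (bP : Rabs (dp * Pp) <= eps * (Rabs PQ + 4 * kappa)).
    { rewrite Rabs_mult. apply Rmult_le_compat; try apply Rabs_pos; auto.
      pose proof (Rabs_triang_inv Pp Pp'); pose proof (Rabs_triang_inv Pp' PQ). lra. }
    apply Rabs_le_between in T. apply Rabs_le_between in kV. apply Rabs_le_between in qV.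
    apply Rabs_le_between in bA. apply Rabs_le_between in bT. apply Rabs_le_between in bP.
    unfold FV. lra. }
  assert (Key2 : forall j, (j < n)%nat -> dot2 (Mmat th2 ph2 (P j)) w <= HQ eps t2 p2 w (Pt j)).
  { intros j Hj.
    assert (HS' : norm3 (P j) <= 1) by (apply Hrad; auto).
    assert (HSt' : norm3 (sub3 (P j) (Pt j)) <= kappa) by (apply Happ; auto).
    assert (HS0' : 0 <= norm3 (P j)) by apply sqrt_pos.
    destruct (near_S _ _ HS' HSt') as [mx [my mz]].
    pose proof (taylorF 0 t2 p2 0 (th2 - t2) (ph2 - p2) (P j) w Hw) as T.
    replace (0 + 0) with 0 in T by ring.
    replace (t2 + (th2 - t2)) with th2 in T by ring.
    replace (p2 + (ph2 - p2)) with ph2 in T by ring.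
    set (dt := th2 - t2) in *. set (dp := ph2 - p2) in *.
    rewrite Rabs_R0, Rplus_0_l in T.
    assert (Hd : (Rabs dt + Rabs dp) ^ 2 * norm3 (P j) / 2 <= 2 * eps ^ 2).
    { pose proof (Rabs_pos dt); pose proof (Rabs_pos dp).
      assert ((Rabs dt + Rabs dp) ^ 2 <= (2 * eps) ^ 2) by (apply pow_incr; lra).
      assert (0 <= (Rabs dt + Rabs dp) ^ 2) by apply pow2_ge_0.
      nra. }
    destruct (rot_bound _ _ _ 0 w (P j) (Pt j) (rows_M t2 p2) Hw) as [kV _].
    destruct (rot_bound _ _ _ 0 w (P j) (Pt j) (rows_Mt t2 p2) Hw) as [kT _].
    destruct (rot_bound _ _ _ 0 w (P j) (Pt j) (rows_Mp t2 p2) Hw) as [kP _].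
    rewrite !rot0 in kV, kT, kP.
    pose proof (errH0 sin cos sinQ cosQ t2 t2 p2 (Pt j) w st2 ct2 st2 ct2 sp2 cp2 mx my mz Hw1 Hw2) as qV.
    pose proof (errHt sin cos sinQ cosQ t2 t2 p2 (Pt j) w st2 ct2 st2 ct2 sp2 cp2 mx my mz Hw1 Hw2) as qT.
    pose proof (errHp sin cos sinQ cosQ t2 t2 p2 (Pt j) w st2 ct2 st2 ct2 sp2 cp2 mx my mz Hw1 Hw2) as qP.
    unfold HQ, MQ, MtQ, MpQ, Mmat.
    unfold FV, FA, FT, FP in T. rewrite !rot0 in T.
    set (V := dot2 (M_gen sin cos t2 p2 (P j)) w) in *.
    set (Tt := dot2 (Mt_gen sin cos t2 p2 (P j)) w) in *.
    set (Pp := dot2 (Mp_gen sin cos t2 p2 (P j)) w) in *.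
    set (V' := dot2 (M_gen sin cos t2 p2 (Pt j)) w) in *.
    set (Tt' := dot2 (Mt_gen sin cos t2 p2 (Pt j)) w) in *.
    set (Pp' := dot2 (Mp_gen sin cos t2 p2 (Pt j)) w) in *.
    set (VQ := dot2 (M_gen sinQ cosQ t2 p2 (Pt j)) w) in *.
    set (TQ := dot2 (Mt_gen sinQ cosQ t2 p2 (Pt j)) w) in *.
    set (PQ := dot2 (Mp_gen sinQ cosQ t2 p2 (Pt j)) w) in *.
    assert (bT : Rabs (dt * Tt) <= eps * (Rabs TQ + 3 * kappa)).
    { rewrite Rabs_mult. apply Rmult_le_compat; try apply Rabs_pos; auto.
      pose proof (Rabs_triang_inv Tt Tt'); pose proof (Rabs_triang_inv Tt' TQ). lra. }
    assert (bP : Rabs (dp * Pp) <= eps * (Rabs PQ + 3 * kappa)).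
    { rewrite Rabs_mult. apply Rmult_le_compat; try apply Rabs_pos; auto.
      pose proof (Rabs_triang_inv Pp Pp'); pose proof (Rabs_triang_inv Pp' PQ). lra. }
    rewrite Rmult_0_l, Rplus_0_l in T.
    apply Rabs_le_between in T. apply Rabs_le_between in kV. apply Rabs_le_between in qV.
    apply Rabs_le_between in bT. apply Rabs_le_between in bP.
    lra. }
  destruct (Hin s Hs) as [r [Hr Hc]].
  assert (Hx : in_conv2 n (fun j => Mmat th2 ph2 (P j)) (Rot al (Mmat th1 ph1 (P s)))).
  { apply Hc. unfold dist2. replace (_ + _) with 0 by ring. rewrite sqrt_0. exact Hr. }
  destruct Hx as [l [Hl [Hl1 [Hf Hsn]]]].
  assert (Hc1 : dot2 (Rot al (Mmat th1 ph1 (P s))) w = FV al th1 ph1 S w) by reflexivity.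
  assert (Hq : forall j, (j < n)%nat -> dot2 (Mmat th2 ph2 (P j)) w < dot2 (Rot al (Mmat th1 ph1 (P s))) w).
  { intros j Hj. rewrite Hc1. specialize (Key2 j Hj). specialize (HGH j Hj). change (Pt s) with St in HGH. lra. }
  destruct (conv_strict n l (fun j => dot2 (Mmat th2 ph2 (P j)) w) _ Hl Hq) as [_ [_ C]].
  rewrite Hl1 in C. specialize (C Rlt_0_1).
  unfold dot2 in C. rewrite <- rsum_lin, <- Hf, <- Hsn in C. lra.
Qed.
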